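(* Let $\alpha,\mu,\gamma>0$ and consider on the simplex $\Sigma=\{(L,R)\in\mathbb{R}^2: L\ge 0,\ R\ge 0,\ L+R\le 1\}$ the system \[ \dot L=\alpha L C-\mu L+\gamma R C,\qquad \dot R=\alpha R C-\mu R+\gamma L C,\qquad C=1-L-R. \] Set $\beta=\alpha+\gamma$. Then: (1) If $\beta\le\mu$, the equilibrium $E_0=(0,0)$ is globally asymptotically stable on $\Sigma$; in particular $L(t),R(t)\to 0$ and $C(t)\to 1$ for every solution starting in $\Sigma$. (2) If $\beta>\mu$, the point $E_1=(P^*,P^* )$ with $P^*=\tfrac12(1-\mu/\beta)$ (so that $C^*=1-2P^*=\mu/\beta$) is the unique interior equilibrium, it is globally asymptotically stable on $\Sigma\setminus\{E_0\}$, and $E_0$ is unstable. *)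

(* Defs.v *)
From Stdlib Require Import Reals Lra.
From Coquelicot Require Import Coquelicot.
Open Scope R_scope.

Definition Cfree (x y : R) : R := 1 - x - y.
Definition fL (al mu ga x y : R) : R :=
  al * x * Cfree x y - mu * x + ga * y * Cfree x y.
Definition fR (al mu ga x y : R) : R :=
  al * y * Cfree x y - mu * y + ga * x * Cfree x y.

Definition in_simplex (x y : R) : Prop := 0 <= x /\ 0 <= y /\ x + y <= 1.
Definition in_interior (x y : R) : Prop := 0 < x /\ 0 < y /\ x + y < 1.

Definition is_solution (al mu ga : R) (Lf Rf : R -> R) : Prop :=
  (forall t, 0 < t ->
     is_derive Lf t (fL al mu ga (Lf t) (Rf t)) /\
     is_derive Rf t (fR al mu ga (Lf t) (Rf t))) /\
  filterlim Lf (at_right 0) (locally (Lf 0)) /\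
  filterlim Rf (at_right 0) (locally (Rf 0)).

Definition dist2 (x1 y1 x2 y2 : R) : R := sqrt ((x1 - x2) ^ 2 + (y1 - y2) ^ 2).

Definition equilibrium (al mu ga e1 e2 : R) : Prop :=
  fL al mu ga e1 e2 = 0 /\ fR al mu ga e1 e2 = 0.

Definition stable_on (al mu ga : R) (S : R -> R -> Prop) (e1 e2 : R) : Prop :=
  forall eps, 0 < eps -> exists delta, 0 < delta /\
    forall Lf Rf, is_solution al mu ga Lf Rf -> S (Lf 0) (Rf 0) ->
      dist2 (Lf 0) (Rf 0) e1 e2 < delta ->
      forall t, 0 <= t -> dist2 (Lf t) (Rf t) e1 e2 < eps.

Definition attractive_on (al mu ga : R) (S : R -> R -> Prop) (e1 e2 : R) : Prop :=
  forall Lf Rf, is_solution al mu ga Lf Rf -> S (Lf 0) (Rf 0) ->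
    is_lim Lf p_infty e1 /\ is_lim Rf p_infty e2.

Definition GAS_on (al mu ga : R) (S : R -> R -> Prop) (e1 e2 : R) : Prop :=
  equilibrium al mu ga e1 e2 /\ stable_on al mu ga S e1 e2 /\
  attractive_on al mu ga S e1 e2.

Definition simplex_minus_E0 (x y : R) : Prop :=
  in_simplex x y /\ ~ (x = 0 /\ y = 0).

(* Main.v *)
Require Import Defs.
From Stdlib Require Import Reals.
From Coquelicot Require Import Coquelicot.
Open Scope R_scope.
From Stdlib Require Import Lra.

Definition rc (f : R -> R) := filterlim f (at_right 0) (locally (f 0)).

Lemma rc_eps (f : R -> R) : rc f -> forall eps, 0 < eps -> exists d, 0 < d /\
  forall t, 0 < t < d -> Rabs (f t - f 0) < eps.
Proof.
  intros H eps He.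
  assert (Hb := H (ball (f 0) (mkposreal _ He)) (locally_ball _ _)).
  destruct Hb as [d Hd].
  exists d; split; [apply cond_pos|].
  intros t [h1 h2]. apply (Hd t).
  - change (Rabs (t - 0) < d). rewrite Rminus_0_r, Rabs_pos_eq; lra.
  - exact h1.
Qed.

Lemma mvt_seg (f df : R -> R) a b : 0 < a -> a <= b ->
  (forall t, 0 < t -> is_derive f t (df t)) ->
  (forall t, a <= t <= b -> df t <= 0) -> f b <= f a.
Proof.
  intros ha hab Hd Hneg.
  destruct (MVT_gen f a b df) as [c [hc e]].
  - intros x; rewrite Rmin_left, Rmax_right by lra. intros hx. apply Hd; lra.
  - intros x; rewrite Rmin_left, Rmax_right by lra. intros hx.
    apply continuity_pt_filterlim. apply (ex_derive_continuous (K:=R_AbsRing) (V:=R_NormedModule)).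
    eexists; apply Hd; lra.
  - rewrite Rmin_left, Rmax_right in hc by lra.
    assert (df c <= 0) by (apply Hneg; lra).
    assert (df c * (b - a) <= 0) by (apply Rmult_le_0_r; lra). lra.
Qed.

Lemma nonincr (f df : R -> R) a b : rc f ->
  (forall t, 0 < t -> is_derive f t (df t)) ->
  (forall t, 0 < t -> a <= t <= b -> df t <= 0) -> 0 <= a -> a <= b -> f b <= f a.
Proof.
  intros Hrc Hd Hneg ha hab.
  destruct (Rle_lt_or_eq_dec 0 a ha) as [ha'|<-].
  - apply (mvt_seg f df); auto. intros t ht; apply Hneg; lra.
  - destruct (Rle_lt_or_eq_dec 0 b hab) as [hb|<-]; [|lra].
    destruct (Rle_or_lt (f b) (f 0)) as [|hlt]; auto.
    destruct (rc_eps f Hrc (f b - f 0)) as [d [hd Hd2]]; [lra|].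
    set (t := Rmin (d/2) b).
    assert (ht : 0 < t /\ t < d /\ t <= b).
    { unfold t; split; [apply Rmin_glb_lt; lra|split].
      - apply Rle_lt_trans with (d/2); [apply Rmin_l|lra].
      - apply Rmin_r. }
    assert (f b <= f t) by (apply (mvt_seg f df); try lra; auto;
      intros s hs; apply Hneg; lra).
    assert (Rabs (f t - f 0) < f b - f 0) by (apply Hd2; lra).
    apply Rabs_def2 in H0. lra.
Qed.

Lemma rc_plus (f g : R -> R) : rc f -> rc g -> rc (fun t => f t + g t).
Proof.
  intros hf hg. unfold rc.
  apply (filterlim_comp_2 f g Rplus hf hg).
  apply (filterlim_plus (K:=R_AbsRing) (V:=R_NormedModule)).
Qed.

Lemma rc_mult (f g : R -> R) : rc f -> rc g -> rc (fun t => f t * g t).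
Proof.
  intros hf hg. unfold rc.
  apply (filterlim_comp_2 f g Rmult hf hg).
  apply (filterlim_mult (K:=R_AbsRing)).
Qed.

Lemma rc_cont (f : R -> R) : continuous f 0 -> rc f.
Proof.
  intros h. unfold rc. eapply filterlim_filter_le_1; [|exact h].
  apply filter_le_within.
Qed.

Lemma rc_comp (f phi : R -> R) : rc f -> continuous phi (f 0) -> rc (fun t => phi (f t)).
Proof.
  intros hf hp. unfold rc. eapply filterlim_comp; [exact hf| exact hp].
Qed.

Lemma rc_der_comp (f phi : R -> R) : rc f -> (forall x, ex_derive phi x) -> rc (fun t => phi (f t)).
Proof.
  intros hf hp. apply rc_comp; auto.
  apply (ex_derive_continuous (K:=R_AbsRing) (V:=R_NormedModule)). auto.
Qed.

Lemma rc_der (phi : R -> R) : (forall x, ex_derive phi x) -> rc phi.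
Proof.
  intros hp. apply rc_cont.
  apply (ex_derive_continuous (K:=R_AbsRing) (V:=R_NormedModule)). auto.
Qed.

Lemma gronwall (W dW : R -> R) K a t : rc W ->
  (forall s, 0 < s -> is_derive W s (dW s)) ->
  (forall s, 0 < s -> a <= s <= t -> dW s <= K * W s) ->
  0 <= a -> a <= t -> W t <= W a * exp (K * (t - a)).
Proof.
  intros hrc hd hle ha hat.
  set (g := fun u => W u * exp (- K * u)).
  assert (hg : g t <= g a).
  { apply (nonincr g (fun s => dW s * exp (-K*s) + W s * (-K * exp (-K*s)))); auto.
    - unfold g. apply rc_mult; auto. apply rc_der. intros; auto_derive; auto.
    - intros s hs. unfold g. apply (is_derive_mult W (fun s => exp (-K*s))).
      + apply hd; auto.
      + auto_derive; auto. ring.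
      + intros; apply Rmult_comm.
    - intros s hs hs2. assert (h := hle s hs hs2). 
      assert (0 < exp (-K*s)) by apply exp_pos. nra. }
  unfold g in hg.
  replace (W t) with (W t * exp (-K*t) * exp (K*t)).
  2:{ rewrite Rmult_assoc, <- exp_plus. replace (-K*t + K*t) with 0 by ring. rewrite exp_0. ring. }
  replace (exp (K*(t-a))) with (exp (-K*a) * exp (K*t)).
  2:{ rewrite <- exp_plus. f_equal. ring. }
  assert (0 < exp (K*t)) by apply exp_pos. nra.
Qed.

Definition pp2 (x : R) := Rmax x 0 * Rmax x 0.

Lemma pp2_key x h : Rabs (pp2 (x+h) - pp2 x - 2 * Rmax x 0 * h) <= h * h.
Proof.
  unfold pp2, Rmax. apply Rabs_le.
  destruct (Rle_dec (x+h) 0); destruct (Rle_dec x 0); split; nra.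
Qed.

Lemma pp2_der x : is_derive pp2 x (2 * Rmax x 0).
Proof.
  apply is_derive_Reals. intros eps he.
  exists (mkposreal _ he). intros h hn hh. simpl in hh.
  apply Rle_lt_trans with (Rabs h); [|exact hh].
  replace ((pp2 (x + h) - pp2 x) / h - 2 * Rmax x 0)
    with ((pp2 (x+h) - pp2 x - 2 * Rmax x 0 * h) / h) by (field; auto).
  unfold Rdiv. rewrite Rabs_mult, Rabs_inv.
  assert (0 < Rabs h) by (apply Rabs_pos_lt; auto).
  apply (Rmult_le_reg_r (Rabs h)); auto.
  rewrite Rmult_assoc, Rinv_l by lra. rewrite Rmult_1_r.
  replace (Rabs h * Rabs h) with (h*h). apply pp2_key.
  rewrite <- Rabs_mult. rewrite Rabs_pos_eq; nra.
Qed.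

Lemma pp2_nonneg x : 0 <= pp2 x.
Proof. unfold pp2. nra. Qed.

Lemma pp2_le0 x : pp2 x <= 0 -> x <= 0.
Proof. unfold pp2, Rmax. destruct (Rle_dec x 0); intros; nra. Qed.

Lemma pp2_zero x : x <= 0 -> pp2 x = 0.
Proof. unfold pp2, Rmax. destruct (Rle_dec x 0); intros; nra. Qed.

Lemma pp2_ex x : ex_derive pp2 x.
Proof. eexists; apply pp2_der. Qed.

Lemma is_derive_eq (f : R -> R) x l l' : l = l' -> is_derive f x l -> is_derive f x l'.
Proof. intros ->; auto. Qed.

Lemma comp_der (phi dphi S dS : R -> R) : (forall x, is_derive phi x (dphi x)) -> rc S ->
  (forall t, 0 < t -> is_derive S t (dS t)) ->
  rc (fun t => phi (S t)) /\ forall t, 0 < t -> is_derive (fun t => phi (S t)) t (dS t * dphi (S t)).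
Proof.
  intros hp hS hd. split.
  - apply rc_der_comp; auto. intros x; eexists; apply hp.
  - intros t ht. apply (is_derive_comp phi S t (dphi (S t)) (dS t)); auto.
Qed.


Definition Sf (Lf Rf : R -> R) t := Lf t + Rf t.
Definition Df (Lf Rf : R -> R) t := Lf t - Rf t.

Section Sol.
Variables al mu ga : R.
Hypotheses (hal : 0 < al) (hmu : 0 < mu) (hga : 0 < ga).
Variables Lf Rf : R -> R.
Hypothesis hsol : is_solution al mu ga Lf Rf.

Let S := Sf Lf Rf.
Let D := Df Lf Rf.

Lemma S_rc : rc S.
Proof. destruct hsol as [_ [h1 h2]]. apply rc_plus; auto. Qed.

Lemma D_rc : rc D.
Proof. destruct hsol as [_ [h1 h2]]. unfold D, Df.
  apply (rc_plus Lf (fun t => - Rf t)); auto.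
  apply (rc_comp Rf Ropp); auto. apply (ex_derive_continuous (K:=R_AbsRing) (V:=R_NormedModule)).
  auto_derive; auto.
Qed.

Definition dSf (s : R) := s * ((al + ga) * (1 - s) - mu).

Lemma S_der t : 0 < t -> is_derive S t (dSf (S t)).
Proof.
  intros ht. destruct hsol as [h _]. destruct (h t ht) as [h1 h2].
  assert (H := is_derive_plus Lf Rf t _ _ h1 h2).
  unfold S, Sf. replace (dSf (Lf t + Rf t)) with (plus (fL al mu ga (Lf t) (Rf t)) (fR al mu ga (Lf t) (Rf t))).
  exact H.
  unfold plus; simpl. unfold dSf, fL, fR, Cfree. ring.
Qed.

Lemma D_der t : 0 < t -> is_derive D t (D t * ((al - ga) * (1 - S t) - mu)).
Proof.
  intros ht. destruct hsol as [h _]. destruct (h t ht) as [h1 h2].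
  assert (H := is_derive_minus Lf Rf t _ _ h1 h2).
  unfold S, D, Sf, Df. replace (_ * _) with (minus (fL al mu ga (Lf t) (Rf t)) (fR al mu ga (Lf t) (Rf t))).
  exact H.
  unfold minus, plus, opp; simpl. unfold fL, fR, Cfree. ring.
Qed.

Lemma S_le1 : S 0 <= 1 -> forall t, 0 <= t -> S t <= 1.
Proof.
  intros h0 t ht.
  destruct (comp_der (fun x => pp2 (x - 1)) (fun x => 2 * Rmax (x - 1) 0) S (fun t => dSf (S t)))
    as [hrc hd].
  - intros x. eapply is_derive_eq; [|apply (is_derive_comp pp2 (fun x => x - 1) x (2 * Rmax (x-1) 0) 1)].
    + simpl. unfold scal; simpl; unfold mult; simpl; ring.
    + apply pp2_der.
    + auto_derive; auto; ring.
  - apply S_rc.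
  - apply S_der.
  - assert (hg := gronwall _ _ 0 0 t hrc hd).
    assert (pp2 (S 0 - 1) = 0) by (apply pp2_zero; lra).
    assert (pp2 (S t - 1) <= 0).
    { eapply Rle_trans; [apply hg; auto; [|lra]|].
      - intros s hs _. unfold dSf, Rmax. destruct (Rle_dec (S s - 1) 0); [nra|].
        assert (hn : (al + ga) * (1 - S s) - mu < 0) by nra.
        assert (S s * ((al + ga) * (1 - S s) - mu) < 0) by nra. nra.
      - rewrite H. lra. }
    apply pp2_le0 in H0. lra.
Qed.

Definition phiN (x : R) := pp2 (- x) / (1 + x * x).
Definition dphiN (x : R) := ((-1 * (2 * Rmax (- x) 0)) * (1 + x * x) - pp2 (- x) * (2 * x)) / (1 + x * x) ^ 2.

Lemma phiN_der x : is_derive phiN x (dphiN x).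
Proof.
  unfold phiN, dphiN. apply (is_derive_div (fun x => pp2 (- x)) (fun x => 1 + x * x)).
  - eapply is_derive_eq; [|apply (is_derive_comp pp2 Ropp x (2 * Rmax (-x) 0) (-1))].
    + reflexivity.
    + apply pp2_der.
    + auto_derive; auto; ring.
  - auto_derive; auto; ring.
  - nra.
Qed.

Lemma phiN_ineq s : dSf s * dphiN s <= (3 * (al + ga) + 2 * mu) * phiN s.
Proof.
  unfold dSf, dphiN, phiN.
  assert (hq : 0 < 1 + s * s) by nra.
  destruct (Rle_dec 0 s) as [hs|hs].
  - rewrite pp2_zero by lra. unfold Rmax. destruct (Rle_dec (-s) 0); [|lra].
    unfold Rdiv. nra.
  - unfold pp2, Rmax. destruct (Rle_dec (-s) 0); [lra|].
    set (q := 1 + s * s) in *.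
    replace (s * ((al + ga) * (1 - s) - mu) *
      ((-1 * (2 * - s) * q - - s * - s * (2 * s)) / q ^ 2))
      with ((s * s / q) * (2 * ((al + ga) * (1 - s) - mu) / q)).
    2:{ unfold q; field; nra. }
    replace ((3 * (al + ga) + 2 * mu) * (- s * - s / q)) with ((s * s / q) * (3 * (al + ga) + 2 * mu))
      by (field; lra).
    apply Rmult_le_compat_l.
    + apply Rmult_le_pos; [nra|]. left; apply Rinv_0_lt_compat; auto.
    + apply Rle_div_l; auto. unfold q.
      assert (h1 : - s <= (1 + s * s) / 2) by (pose proof (Rle_0_sqr (1+s)); unfold Rsqr in *; lra).
      assert (h2 : (al + ga) * (- s) <= (al + ga) * ((1 + s * s) / 2)) by (apply Rmult_le_compat_l; lra).
      assert (h3 : 0 <= (al + ga + 2 * mu) * (s * s)) by (apply Rmult_le_pos; nra).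
      nra.
Qed.

Lemma S_ge0 : 0 <= S 0 -> forall t, 0 <= t -> 0 <= S t.
Proof.
  intros h0 t ht.
  destruct (comp_der phiN dphiN S (fun t => dSf (S t)) phiN_der S_rc S_der) as [hrc hd].
  assert (hg := gronwall _ _ (3 * (al + ga) + 2 * mu) 0 t hrc hd).
  assert (phiN (S t) <= 0).
  { eapply Rle_trans; [apply hg; auto; [|lra]|].
    - intros s hs _. apply phiN_ineq.
    - unfold phiN. rewrite pp2_zero by lra. unfold Rdiv. rewrite Rmult_0_l, Rmult_0_l. lra. }
  unfold phiN in H.
  assert (pp2 (- S t) <= 0).
  { assert (0 < 1 + S t * S t) by nra.
    apply (Rmult_le_compat_r (1 + S t * S t)) in H; [|lra].
    unfold Rdiv in H. rewrite Rmult_assoc, Rinv_l, Rmult_1_r, Rmult_0_l in H by lra. exact H. }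
  apply pp2_le0 in H0. lra.
Qed.

Lemma S_in : in_simplex (Lf 0) (Rf 0) -> forall t, 0 <= t -> 0 <= S t <= 1.
Proof.
  intros [h1 [h2 h3]] t ht. split.
  - apply S_ge0; auto; unfold S, Sf; lra.
  - apply S_le1; auto; unfold S, Sf; lra.
Qed.

Lemma sq_rc (f : R -> R) : rc f -> rc (fun t => f t * f t).
Proof. intros; apply rc_mult; auto. Qed.

Lemma D_decay c a t : (forall s, 0 < s -> a <= s <= t -> (al - ga) * (1 - S s) - mu <= - c) ->
  0 <= a -> a <= t -> D t * D t <= D a * D a * exp (-2 * c * (t - a)).
Proof.
  intros hc ha hat.
  destruct (comp_der (fun x => x * x) (fun x => 2 * x) D (fun s => D s * ((al - ga) * (1 - S s) - mu)))
    as [hrc hd].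
  - intros x. auto_derive; auto; ring.
  - apply D_rc.
  - apply D_der.
  - apply (gronwall _ _ (-2 * c) a t hrc hd); auto.
    intros s hs hs2. assert (h := hc s hs hs2).
    assert (0 <= D s * D s) by nra. nra.
Qed.

Section Case1.
Hypothesis hb : al + ga <= mu.
Hypothesis hin : in_simplex (Lf 0) (Rf 0).

Lemma S_noninc a t : 0 <= a -> a <= t -> S t <= S a.
Proof.
  intros ha hat. apply (nonincr S (fun s => dSf (S s))); auto.
  - apply S_rc.
  - apply S_der.
  - intros s hs _. destruct (S_in hin s) as [h1 h2]; [lra|]. unfold dSf. nra.
Qed.

Lemma S_to0 eps : 0 < eps -> exists T, 0 <= T /\ forall t, T <= t -> S t < eps.
Proof.
  intros he. set (b := al + ga).
  assert (hbp : 0 < b) by (unfold b; lra).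
  set (T := 2 / (b * (eps * eps))).
  assert (hT : 0 < T) by (unfold T; apply Rdiv_lt_0_compat; [lra|]; apply Rmult_lt_0_compat; nra).
  assert (hST : S T < eps).
  { destruct (Rlt_or_le (S T) eps) as [|hge]; auto. exfalso.
    set (g := fun s => S s + b * (eps * eps) * s).
    assert (g T <= g 0).
    { apply (nonincr g (fun s => dSf (S s) + b * (eps * eps))); try lra.
      - unfold g. apply rc_plus; [apply S_rc|]. apply rc_der. intros; auto_derive; auto.
      - intros s hs. unfold g. apply (is_derive_plus S (fun s => b * (eps * eps) * s)).
        + apply S_der; auto.
        + auto_derive; auto; ring.
      - intros s hs [_ hsT]. assert (S T <= S s) by (apply S_noninc; lra).
        destruct (S_in hin s) as [h1 h2]; [lra|]. unfold dSf. fold b.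
        assert (eps * eps <= S s * S s) by nra.
        assert (S s * (b - mu) <= 0) by (apply Rmult_le_0_l; unfold b; lra).
        assert (b * (eps * eps - S s * S s) <= 0) by (apply Rmult_le_0_l; lra).
        nra. }
    unfold g in H. rewrite Rmult_0_r, Rplus_0_r in H.
    destruct (S_in hin 0) as [h1 h2]; [lra|].
    assert (b * (eps * eps) * T = 2) by (unfold T; field; nra). lra. }
  exists T; split; [lra|]. intros t ht. apply Rle_lt_trans with (S T); auto.
  apply S_noninc; lra.
Qed.

End Case1.

Section Case2.
Hypothesis hb : mu < al + ga.
Let K := 1 - mu / (al + ga).

Lemma K_bounds : 0 < K < 1.
Proof.
  unfold K. assert (0 < mu / (al + ga) < 1).
  { split. apply Rdiv_lt_0_compat; lra. apply Rlt_div_l; lra. }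
  lra.
Qed.

Lemma dSf_K x : dSf x = (al + ga) * x * (K - x).
Proof. unfold dSf, K. field. lra. Qed.

Lemma V_bound c : in_simplex (Lf 0) (Rf 0) -> 0 <= c -> (forall s, 0 < s -> c <= S s) ->
  forall t, 0 <= t -> (S t - K) * (S t - K) <= (S 0 - K) * (S 0 - K) * exp (-2 * (al + ga) * c * (t - 0)).
Proof.
  intros hin hc hS t ht.
  destruct (comp_der (fun x => (x - K) * (x - K)) (fun x => 2 * (x - K)) S (fun s => dSf (S s)))
    as [hrc hd].
  - intros x. auto_derive; auto; ring.
  - apply S_rc.
  - apply S_der.
  - apply (gronwall _ _ (-2 * (al + ga) * c) 0 t hrc hd); try lra.
    intros s hs _. rewrite dSf_K. assert (h := hS s hs).
    set (V := (S s - K) * (S s - K)).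
    assert (0 <= V) by apply Rle_0_sqr.
    assert (h2 : c * V <= S s * V) by (apply Rmult_le_compat_r; lra).
    assert (h3 : (al + ga) * (c * V) <= (al + ga) * (S s * V)) by (apply Rmult_le_compat_l; lra).
    replace ((al + ga) * S s * (K - S s) * (2 * (S s - K))) with (-2 * ((al + ga) * (S s * V))) by (unfold V; ring).
    replace (-2 * (al + ga) * c * V) with (-2 * ((al + ga) * (c * V))) by ring.
    lra.
Qed.

Lemma S_lower : simplex_minus_E0 (Lf 0) (Rf 0) -> forall t, 0 <= t -> Rmin (S 0) K <= S t.
Proof.
  intros [hin hne] t ht. set (m := Rmin (S 0) K).
  assert (hmK : m <= K) by apply Rmin_r.
  destruct (comp_der (fun x => pp2 (m - x)) (fun x => -1 * (2 * Rmax (m - x) 0)) S (fun s => dSf (S s)))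
    as [hrc hd].
  - intros x. eapply is_derive_eq; [|apply (is_derive_comp pp2 (fun x => m - x) x (2 * Rmax (m - x) 0) (-1))].
    + reflexivity.
    + apply pp2_der.
    + auto_derive; auto; ring.
  - apply S_rc.
  - apply S_der.
  - assert (hg := gronwall _ _ 0 0 t hrc hd).
    assert (pp2 (m - S 0) = 0) by (apply pp2_zero; unfold m; generalize (Rmin_l (S 0) K); lra).
    assert (pp2 (m - S t) <= 0).
    { eapply Rle_trans; [apply hg; auto; [|lra]|].
      - intros s hs _. rewrite dSf_K. destruct (S_in hin s) as [h1 h2]; [lra|].
        unfold Rmax. destruct (Rle_dec (m - S s) 0); [nra|].
        assert (0 <= (al + ga) * S s * (K - S s)).
        { apply Rmult_le_pos; [apply Rmult_le_pos|]; lra. }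
        nra.
      - rewrite H. lra. }
    apply pp2_le0 in H0. lra.
Qed.

Let c2 := ga * mu / (al + ga).
Let d2 := c2 / (al + ga).

Lemma c2_pos : 0 < c2.
Proof. unfold c2. apply Rdiv_lt_0_compat; nra. Qed.

Lemma d2_pos : 0 < d2.
Proof. unfold d2. apply Rdiv_lt_0_compat; [apply c2_pos|lra]. Qed.

Lemma coef_bound x : (x - K) * (x - K) <= d2 * d2 -> (al - ga) * (1 - x) - mu <= - c2.
Proof.
  intros h.
  assert (e : (al - ga) * (1 - x) - mu = -2 * c2 - (al - ga) * (x - K)).
  { unfold c2, K. field. lra. }
  rewrite e. set (y := (al - ga) * (x - K)).
  assert (hc := c2_pos).
  assert (e2 : c2 = (al + ga) * d2) by (unfold d2; field; lra).
  assert (hy : y * y < c2 * c2).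
  { unfold y. rewrite e2.
    assert ((al - ga) * (al - ga) < (al + ga) * (al + ga)) by nra.
    assert (0 <= (x - K) * (x - K)) by apply Rle_0_sqr.
    assert (hd := d2_pos).
    replace ((al - ga) * (x - K) * ((al - ga) * (x - K))) with (((al - ga) * (al - ga)) * ((x - K) * (x - K))) by ring.
    replace ((al + ga) * d2 * ((al + ga) * d2)) with (((al + ga) * (al + ga)) * (d2 * d2)) by ring.
    apply Rle_lt_trans with (((al - ga) * (al - ga)) * (d2 * d2)).
    - apply Rmult_le_compat_l; [apply Rle_0_sqr| exact h].
    - apply Rmult_lt_compat_r; [apply Rmult_lt_0_compat; exact hd| assumption]. }
  assert (- y < c2) by nra. lra.
Qed.

End Case2.

End Sol.

Lemma exp_le1 x : x <= 0 -> exp x <= 1.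
Proof.
  intros h. destruct (Rle_lt_or_eq_dec _ _ h) as [h' | e]; [|rewrite e].
  - rewrite <- exp_0. left. apply exp_increasing. auto.
  - rewrite exp_0. lra.
Qed.

Lemma exp_tail A c eps : 0 <= A -> 0 < c -> 0 < eps ->
  exists M, forall t, M < t -> A * exp (- c * t) < eps.
Proof.
  intros hA hc he. exists (A / (c * eps)). intros t ht.
  assert (hM : 0 <= A / (c * eps)) by (apply Rmult_le_pos; [lra|left; apply Rinv_0_lt_compat; nra]).
  assert (hct : A < c * t * eps).
  { apply (Rmult_lt_compat_r (c * eps)) in ht; [|nra].
    unfold Rdiv in ht. rewrite Rmult_assoc, Rinv_l in ht by nra. lra. }
  replace (- c * t) with (- (c * t)) by ring. rewrite exp_Ropp.
  assert (h1 : 1 + c * t < exp (c * t)) by (apply exp_ineq1; nra).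
  assert (0 < exp (c * t)) by apply exp_pos.
  apply (Rmult_lt_reg_r (exp (c * t))); auto.
  rewrite Rmult_assoc, Rinv_l, Rmult_1_r by lra. nra.
Qed.

Lemma lim_of (f : R -> R) (l : R) :
  (forall eps, 0 < eps -> exists M, forall t, M < t -> - eps < f t - l < eps) -> is_lim f p_infty l.
Proof.
  intros h. apply is_lim_spec. intros eps. destruct (h eps (cond_pos eps)) as [M hM].
  exists M. intros t ht. apply Rabs_def1; apply hM; auto.
Qed.

Lemma sqrt_lt_sq a b : 0 <= a -> sqrt a < b -> a < b * b.
Proof.
  intros ha h. assert (0 <= sqrt a) by apply sqrt_pos.
  rewrite <- (sqrt_sqrt a ha). nra.
Qed.

Lemma sq_lt_sqrt a b : 0 <= a -> 0 < b -> a < b * b -> sqrt a < b.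
Proof.
  intros ha hb h. rewrite <- (sqrt_square b) by lra. apply sqrt_lt_1_alt. lra.
Qed.

Lemma coef1 al mu ga x : 0 < al -> 0 < ga -> al + ga <= mu -> 0 <= x <= 1 ->
  (al - ga) * (1 - x) - mu <= - ga.
Proof.
  intros ha hg hb hx. destruct (Rle_dec ga al).
  - assert ((al - ga) * (1 - x) <= al - ga) by nra. lra.
  - assert ((al - ga) * (1 - x) <= 0) by nra. lra.
Qed.

Lemma case1_D al mu ga Lf Rf : 0 < al -> 0 < mu -> 0 < ga -> is_solution al mu ga Lf Rf ->
  al + ga <= mu -> in_simplex (Lf 0) (Rf 0) -> forall t, 0 <= t ->
  Df Lf Rf t * Df Lf Rf t <= Df Lf Rf 0 * Df Lf Rf 0 * exp (- (2 * ga) * t).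
Proof.
  intros ha hm hg hs hb hin t ht.
  replace (- (2 * ga) * t) with (-2 * ga * (t - 0)) by ring.
  apply (D_decay al mu ga Lf Rf hs ga 0 t); try lra.
  intros s hs0 _. apply coef1; auto. apply (S_in al mu ga ha hm hg Lf Rf hs hin); lra.
Qed.

Lemma case1_conv al mu ga Lf Rf : 0 < al -> 0 < mu -> 0 < ga -> is_solution al mu ga Lf Rf ->
  al + ga <= mu -> in_simplex (Lf 0) (Rf 0) ->
  forall eps, 0 < eps -> exists M, forall t, M < t ->
    0 <= Sf Lf Rf t < eps /\ Df Lf Rf t * Df Lf Rf t < eps * eps.
Proof.
  intros ha hm hg hs hb hin eps he.
  destruct (S_to0 al mu ga ha hm hg Lf Rf hs hb hin eps he) as [T [hT HT]].
  destruct (exp_tail (Df Lf Rf 0 * Df Lf Rf 0) (2 * ga) (eps * eps)) as [M1 HM1];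
    [apply Rle_0_sqr|lra|nra|].
  exists (Rmax T M1). intros t ht.
  assert (T <= t) by (generalize (Rmax_l T M1); lra).
  assert (M1 < t) by (generalize (Rmax_r T M1); lra).
  split; [split|].
  - apply (S_in al mu ga ha hm hg Lf Rf hs hin); lra.
  - apply HT; lra.
  - eapply Rle_lt_trans; [apply (case1_D al mu ga Lf Rf); auto; lra|]. apply HM1; auto.
Qed.

Lemma case2_conv al mu ga Lf Rf : 0 < al -> 0 < mu -> 0 < ga -> is_solution al mu ga Lf Rf ->
  mu < al + ga -> simplex_minus_E0 (Lf 0) (Rf 0) ->
  forall eps, 0 < eps -> exists M, forall t, M < t ->
    (Sf Lf Rf t - (1 - mu / (al + ga))) * (Sf Lf Rf t - (1 - mu / (al + ga))) < eps * eps /\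
    Df Lf Rf t * Df Lf Rf t < eps * eps.
Proof.
  intros ha hm hg hs hb hE eps he.
  assert (hin : in_simplex (Lf 0) (Rf 0)) by apply hE.
  set (K := 1 - mu / (al + ga)).
  assert (hK : 0 < K < 1) by (apply (K_bounds al mu ga); auto).
  assert (hS0 : 0 < Sf Lf Rf 0).
  { destruct hE as [[h1 [h2 h3]] hne]. unfold Sf.
    destruct (Rlt_or_le 0 (Lf 0 + Rf 0)) as [|hle]; auto.
    exfalso. apply hne. lra. }
  set (m := Rmin (Sf Lf Rf 0) K).
  assert (hm0 : 0 < m) by (apply Rmin_glb_lt; lra).
  assert (hSl : forall s, 0 < s -> m <= Sf Lf Rf s).
  { intros s hs0. apply (S_lower al mu ga ha hm hg Lf Rf hs hE); lra. }
  set (V0 := (Sf Lf Rf 0 - K) * (Sf Lf Rf 0 - K)).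
  assert (hV0 : 0 <= V0) by apply Rle_0_sqr.
  assert (hV : forall t, 0 <= t -> (Sf Lf Rf t - K) * (Sf Lf Rf t - K) <= V0 * exp (- (2 * (al + ga) * m) * t)).
  { intros t ht. replace (- (2 * (al + ga) * m) * t) with (-2 * (al + ga) * m * (t - 0)) by ring.
    apply (V_bound al mu ga ha hg Lf Rf hs m hin); auto; lra. }
  assert (hc2 := c2_pos al mu ga ha hm hg).
  assert (hd2 := d2_pos al mu ga ha hm hg).
  set (c2 := ga * mu / (al + ga)) in *.
  set (d2 := c2 / (al + ga)) in *.
  assert (hbm : 0 < 2 * (al + ga) * m) by nra.
  destruct (exp_tail V0 (2 * (al + ga) * m) (d2 * d2) hV0 hbm) as [M1 HM1]; [nra|].
  set (T0 := Rmax M1 0 + 1).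
  assert (hT0 : M1 < T0 /\ 0 < T0) by (unfold T0; generalize (Rmax_l M1 0) (Rmax_r M1 0); lra).
  assert (hcoef : forall s, T0 <= s -> (al - ga) * (1 - Sf Lf Rf s) - mu <= - c2).
  { intros s hsT. apply (coef_bound al mu ga ha hm hg). fold K c2 d2.
    left. eapply Rle_lt_trans; [apply hV; lra|]. apply HM1. lra. }
  set (A2 := Df Lf Rf T0 * Df Lf Rf T0 * exp (2 * c2 * T0)).
  assert (hA2 : 0 <= A2).
  { unfold A2. apply Rmult_le_pos; [apply Rle_0_sqr| left; apply exp_pos]. }
  assert (hD : forall t, T0 <= t -> Df Lf Rf t * Df Lf Rf t <= A2 * exp (- (2 * c2) * t)).
  { intros t ht. eapply Rle_trans.
    - apply (D_decay al mu ga Lf Rf hs c2 T0 t); try lra.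
      intros s _ [hs1 _]. apply hcoef; auto.
    - unfold A2.
      replace (exp (-2 * c2 * (t - T0))) with (exp (2 * c2 * T0) * exp (- (2 * c2) * t))
        by (rewrite <- exp_plus; f_equal; ring).
      right; ring. }
  destruct (exp_tail A2 (2 * c2) (eps * eps) hA2) as [M2 HM2]; [lra|nra|].
  destruct (exp_tail V0 (2 * (al + ga) * m) (eps * eps) hV0 hbm) as [M3 HM3]; [nra|].
  exists (Rmax (Rmax T0 M2) M3). intros t ht.
  generalize (Rmax_l (Rmax T0 M2) M3) (Rmax_r (Rmax T0 M2) M3) (Rmax_l T0 M2) (Rmax_r T0 M2). intros.
  split.
  - eapply Rle_lt_trans; [apply hV; lra|]. apply HM3. lra.
  - eapply Rle_lt_trans; [apply hD; lra|]. apply HM2. lra.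
Qed.

Definition Pdiag (b r p0 t : R) := p0 * r * exp (r * t) / (r + 2 * b * p0 * (exp (r * t) - 1)).

Lemma diag_sol al mu ga p0 : 0 < al -> 0 < mu -> 0 < ga -> mu < al + ga -> 0 < p0 ->
  2 * (al + ga) * p0 <= (al + ga - mu) / 2 ->
  is_solution al mu ga (Pdiag (al + ga) (al + ga - mu) p0) (Pdiag (al + ga) (al + ga - mu) p0).
Proof.
  intros ha hm hg hb hp hp2.
  set (r := al + ga - mu) in *. set (b := al + ga) in *.
  assert (hden : forall t, 0 < r + 2 * b * p0 * (exp (r * t) - 1)).
  { intros t. assert (0 < exp (r * t)) by apply exp_pos.
    assert (0 < 2 * b * p0 * exp (r * t)) by (assert (0 < b) by (unfold b; lra); apply Rmult_lt_0_compat; [apply Rmult_lt_0_compat; [apply Rmult_lt_0_compat; lra|lra]|auto]).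
    assert (0 < r) by (unfold r, b in *; lra).
    replace (r + 2 * b * p0 * (exp (r * t) - 1)) with ((r - 2 * b * p0) + 2 * b * p0 * exp (r * t)) by ring.
    lra. }
  assert (hder : forall t, is_derive (Pdiag b r p0) t (fL al mu ga (Pdiag b r p0 t) (Pdiag b r p0 t))).
  { intros t. unfold Pdiag. specialize (hden t). auto_derive.
    - lra.
    - unfold fL, Cfree. unfold r in *. unfold b in *. field. lra. }
  assert (hder' : forall t, is_derive (Pdiag b r p0) t (fR al mu ga (Pdiag b r p0 t) (Pdiag b r p0 t))).
  { intros t. replace (fR al mu ga _ _) with (fL al mu ga (Pdiag b r p0 t) (Pdiag b r p0 t)) by (unfold fL, fR; ring).
    apply hder. }
  assert (hrc : rc (Pdiag b r p0)).
  { apply rc_der. intros x; eexists; apply hder. }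
  split; [|split]; auto.
Qed.

Lemma case1_stab al mu ga Lf Rf : 0 < al -> 0 < mu -> 0 < ga -> is_solution al mu ga Lf Rf ->
  al + ga <= mu -> in_simplex (Lf 0) (Rf 0) -> forall t, 0 <= t ->
  (Lf t - 0) ^ 2 + (Rf t - 0) ^ 2 <= (Lf 0 - 0) ^ 2 + (Rf 0 - 0) ^ 2.
Proof.
  intros ha hm hg hs hb hin t ht.
  assert (e : forall u, (Lf u - 0) ^ 2 + (Rf u - 0) ^ 2 = (Sf Lf Rf u * Sf Lf Rf u + Df Lf Rf u * Df Lf Rf u) / 2)
    by (intros; unfold Sf, Df; field).
  rewrite !e.
  assert (h1 : Sf Lf Rf t <= Sf Lf Rf 0) by (apply (S_noninc al mu ga ha hm hg Lf Rf hs hb hin); lra).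
  assert (h2 : 0 <= Sf Lf Rf t) by (apply (S_in al mu ga ha hm hg Lf Rf hs hin); lra).
  assert (h3 := case1_D al mu ga Lf Rf ha hm hg hs hb hin t ht).
  assert (h4 : exp (- (2 * ga) * t) <= 1) by (apply exp_le1; nra).
  assert (h5 : 0 <= Df Lf Rf 0 * Df Lf Rf 0) by apply Rle_0_sqr.
  assert (Df Lf Rf 0 * Df Lf Rf 0 * exp (- (2 * ga) * t) <= Df Lf Rf 0 * Df Lf Rf 0 * 1)
    by (apply Rmult_le_compat_l; auto).
  assert (Sf Lf Rf t * Sf Lf Rf t <= Sf Lf Rf 0 * Sf Lf Rf 0) by nra.
  lra.
Qed.


Lemma case2_stab al mu ga : 0 < al -> 0 < mu -> 0 < ga -> mu < al + ga ->
  stable_on al mu ga simplex_minus_E0 (/ 2 * (1 - mu / (al + ga))) (/ 2 * (1 - mu / (al + ga))).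
Proof.
  intros ha hm hg hb eps he.
  assert (hc2 := c2_pos al mu ga ha hm hg).
  assert (hd2 := d2_pos al mu ga ha hm hg).
  set (c2 := ga * mu / (al + ga)) in *.
  set (d2 := c2 / (al + ga)) in *.
  set (K := 1 - mu / (al + ga)).
  exists (Rmin eps (d2 / 2)). split; [apply Rmin_glb_lt; lra|].
  intros Lf Rf hs hE hd t ht.
  assert (hin : in_simplex (Lf 0) (Rf 0)) by apply hE.
  set (delta := Rmin eps (d2 / 2)) in *.
  assert (hdel : 0 < delta /\ delta <= eps /\ delta <= d2 / 2).
  { unfold delta; split; [apply Rmin_glb_lt; lra|split; [apply Rmin_l|apply Rmin_r]]. }
  assert (e : forall u, (Lf u - / 2 * K) ^ 2 + (Rf u - / 2 * K) ^ 2 =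
     ((Sf Lf Rf u - K) * (Sf Lf Rf u - K) + Df Lf Rf u * Df Lf Rf u) / 2)
    by (intros; unfold Sf, Df; field).
  unfold dist2 in *. fold K in hd |- *.
  assert (hA0 := sqrt_lt_sq _ _ (Rplus_le_le_0_compat _ _ (pow2_ge_0 _) (pow2_ge_0 _)) hd).
  rewrite e in hA0. rewrite e.
  set (V0 := (Sf Lf Rf 0 - K) * (Sf Lf Rf 0 - K)) in *.
  set (D0 := Df Lf Rf 0 * Df Lf Rf 0) in *.
  assert (hD0 : 0 <= D0) by apply Rle_0_sqr.
  assert (hV0' : 0 <= V0) by apply Rle_0_sqr.
  assert (hV0 : V0 < d2 * d2) by nra.
  assert (hV : forall s, 0 <= s -> (Sf Lf Rf s - K) * (Sf Lf Rf s - K) <= V0).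
  { intros s hs0.
    assert (h := V_bound al mu ga ha hg Lf Rf hs 0 hin (Rle_refl 0)).
    assert (h' : forall s : R, 0 < s -> 0 <= Sf Lf Rf s) by
      (intros u hu; apply (S_in al mu ga ha hm hg Lf Rf hs hin); lra).
    specialize (h h' s hs0).
    replace (-2 * (al + ga) * 0 * (s - 0)) with 0 in h by ring. rewrite exp_0, Rmult_1_r in h.
    exact h. }
  assert (hD : Df Lf Rf t * Df Lf Rf t <= D0).
  { eapply Rle_trans.
    - apply (D_decay al mu ga Lf Rf hs c2 0 t); try lra.
      intros s hs0 _. apply (coef_bound al mu ga ha hm hg). fold K c2 d2.
      left. eapply Rle_lt_trans; [apply hV; lra|]. auto.
    - fold D0. assert (exp (-2 * c2 * (t - 0)) <= 1) by (apply exp_le1; nra).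
      assert (D0 * exp (-2 * c2 * (t - 0)) <= D0 * 1) by (apply Rmult_le_compat_l; auto). lra. }
  apply sq_lt_sqrt; [|lra|].
  - assert (0 <= (Sf Lf Rf t - K) * (Sf Lf Rf t - K)) by apply Rle_0_sqr.
    assert (0 <= Df Lf Rf t * Df Lf Rf t) by apply Rle_0_sqr. lra.
  - assert (hVt := hV t ht). assert (delta * delta <= eps * eps) by nra. lra.
Qed.

Lemma case2_unstab al mu ga : 0 < al -> 0 < mu -> 0 < ga -> mu < al + ga ->
  ~ stable_on al mu ga in_simplex 0 0.
Proof.
  intros ha hm hg hb Hst.
  set (Ps := / 2 * (1 - mu / (al + ga))).
  assert (hK := K_bounds al mu ga ha hm hg hb).
  assert (hPs : 0 < Ps < / 2) by (unfold Ps; lra).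
  set (b := al + ga) in *. set (r := b - mu).
  assert (hr : 0 < r) by (unfold r; lra).
  assert (hbPs : 2 * b * Ps = r) by (unfold Ps, r, b; field; lra).
  destruct (Hst (Ps / 2)) as [delta [hdel H]]; [lra|].
  set (p0 := Rmin (delta / 2) (Ps / 2)).
  assert (hp0 : 0 < p0 /\ p0 <= delta / 2 /\ p0 <= Ps / 2).
  { unfold p0; split; [apply Rmin_glb_lt; lra|split; [apply Rmin_l|apply Rmin_r]]. }
  assert (hp2 : 2 * b * p0 <= r / 2).
  { assert (2 * b * p0 <= 2 * b * (Ps / 2)) by (apply Rmult_le_compat_l; unfold b; lra). lra. }
  assert (hs := diag_sol al mu ga p0 ha hm hg hb (proj1 hp0) hp2).
  fold b in hs. replace (b - mu) with r in hs by reflexivity.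
  set (P := Pdiag b r p0) in *.
  assert (hP0 : P 0 = p0).
  { unfold P, Pdiag. rewrite Rmult_0_r, exp_0. field. lra. }
  set (t1 := ln (Ps / p0) / r).
  assert (hq : 1 < Ps / p0).
  { apply Rlt_div_r; [lra|]. lra. }
  assert (ht1 : 0 <= t1).
  { unfold t1. apply Rmult_le_pos; [|left; apply Rinv_0_lt_compat; auto].
    rewrite <- ln_1. left. apply ln_increasing; lra. }
  assert (hE : exp (r * t1) = Ps / p0).
  { unfold t1. replace (r * (ln (Ps / p0) / r)) with (ln (Ps / p0)) by (field; lra).
    apply exp_ln. lra. }
  assert (hPt : P t1 = r * Ps / (2 * r - 2 * b * p0)).
  { assert (hden : r + 2 * b * p0 * (Ps / p0 - 1) = 2 * r - 2 * b * p0).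
    { replace (2 * b * p0 * (Ps / p0 - 1)) with (2 * b * Ps - 2 * b * p0) by (field; lra). lra. }
    unfold P, Pdiag. rewrite hE, hden. field. lra. }
  assert (hPt2 : Ps / 2 <= P t1).
  { rewrite hPt. assert (0 < 2 * r - 2 * b * p0) by lra.
    apply (Rmult_le_reg_r (2 * r - 2 * b * p0)); auto.
    replace (r * Ps / (2 * r - 2 * b * p0) * (2 * r - 2 * b * p0)) with (r * Ps) by (field; lra).
    assert (0 <= Ps * (b * p0)) by (apply Rmult_le_pos; [lra|]; apply Rmult_le_pos; unfold b; lra). nra. }
  assert (hin : in_simplex (P 0) (P 0)).
  { rewrite hP0. unfold in_simplex. lra. }
  assert (hd : dist2 (P 0) (P 0) 0 0 < delta).
  { unfold dist2. rewrite hP0. apply sq_lt_sqrt; [nra|lra|]. nra. }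
  assert (h := H P P hs hin hd t1 ht1).
  unfold dist2 in h. apply sqrt_lt_sq in h; [|nra]. nra.
Qed.

Lemma case2_all (al mu ga : R) (hal : 0 < al) (hmu : 0 < mu) (hga : 0 < ga) :
  (mu < al + ga ->
     let Ps := / 2 * (1 - mu / (al + ga)) in
     (in_interior Ps Ps /\ equilibrium al mu ga Ps Ps /\
      (forall e1 e2, in_interior e1 e2 -> equilibrium al mu ga e1 e2 ->
         e1 = Ps /\ e2 = Ps)) /\
     GAS_on al mu ga simplex_minus_E0 Ps Ps /\
     ~ stable_on al mu ga in_simplex 0 0).
Proof.
  intros hb Ps.
  assert (hK := K_bounds al mu ga hal hmu hga hb).
  assert (heq : equilibrium al mu ga Ps Ps).
  { unfold equilibrium, fL, fR, Cfree, Ps. split; field; lra. }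
  split; [split; [|split]|split].
  - unfold in_interior, Ps. lra.
  - exact heq.
  - intros e1 e2 [h1 [h2 h3]] [E1 E2].
    assert (Hs : (e1 + e2) * ((al + ga) * (1 - e1 - e2) - mu) = fL al mu ga e1 e2 + fR al mu ga e1 e2)
      by (unfold fL, fR, Cfree; ring).
    assert (Hd : (e1 - e2) * ((al - ga) * (1 - e1 - e2) - mu) = fL al mu ga e1 e2 - fR al mu ga e1 e2)
      by (unfold fL, fR, Cfree; ring).
    rewrite E1, E2 in Hs, Hd. rewrite Rplus_0_r in Hs. rewrite Rminus_0_r in Hd.
    apply Rmult_integral in Hs. destruct Hs as [Hs|Hs]; [lra|].
    assert (hC : 1 - e1 - e2 = mu / (al + ga)) by (field_simplify; [|lra]; apply (Rmult_eq_reg_r (al+ga)); [|lra]; 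
      unfold Rdiv; rewrite Rmult_assoc, Rinv_l, Rmult_1_r by lra; lra).
    rewrite hC in Hd.
    apply Rmult_integral in Hd. destruct Hd as [Hd|Hd].
    + unfold Ps. split; apply (Rmult_eq_reg_l 2); try lra; field_simplify; try lra.
    + exfalso. assert (e : (al - ga) * (mu / (al + ga)) - mu = -2 * (ga * mu / (al + ga))) by (field; lra).
      rewrite e in Hd. assert (0 < ga * mu / (al + ga)) by (apply Rdiv_lt_0_compat; nra). lra.
  - split; [exact heq|split].
    + apply case2_stab; auto.
    + intros Lf Rf hs hE.
      assert (Hc := case2_conv al mu ga Lf Rf hal hmu hga hs hb hE).
      split; apply lim_of; intros eps he; destruct (Hc eps he) as [M HM]; exists M;
        intros t ht; destruct (HM t ht) as [h1 h2];
        assert (- eps < Df Lf Rf t < eps) by (split; nra);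
        assert (- eps < Sf Lf Rf t - (1 - mu / (al + ga)) < eps) by (split; nra);
        unfold Sf, Df, Ps in *; lra.
  - apply case2_unstab; auto.
Qed.

Theorem theorem3p4 (al mu ga : R) (hal : 0 < al) (hmu : 0 < mu) (hga : 0 < ga) :
  (al + ga <= mu ->
     GAS_on al mu ga in_simplex 0 0 /\
     (forall Lf Rf, is_solution al mu ga Lf Rf -> in_simplex (Lf 0) (Rf 0) ->
        is_lim Lf p_infty 0 /\ is_lim Rf p_infty 0 /\
        is_lim (fun t => Cfree (Lf t) (Rf t)) p_infty 1)) /\
  (mu < al + ga ->
     let Ps := / 2 * (1 - mu / (al + ga)) in
     (in_interior Ps Ps /\ equilibrium al mu ga Ps Ps /\
      (forall e1 e2, in_interior e1 e2 -> equilibrium al mu ga e1 e2 ->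
         e1 = Ps /\ e2 = Ps)) /\
     GAS_on al mu ga simplex_minus_E0 Ps Ps /\
     ~ stable_on al mu ga in_simplex 0 0).
Proof.
  split.
  - intros hb.
    assert (Hlim : forall Lf Rf, is_solution al mu ga Lf Rf -> in_simplex (Lf 0) (Rf 0) ->
        is_lim Lf p_infty 0 /\ is_lim Rf p_infty 0 /\
        is_lim (fun t => Cfree (Lf t) (Rf t)) p_infty 1).
    { intros Lf Rf hs hin.
      assert (Hc := case1_conv al mu ga Lf Rf hal hmu hga hs hb hin).
      split; [|split]; apply lim_of; intros eps he; destruct (Hc eps he) as [M HM]; exists M;
        intros t ht; destruct (HM t ht) as [[h1 h2] h3];
        assert (- eps < Df Lf Rf t < eps) by (split; nra);
        unfold Sf, Df, Cfree in *; lra. }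
    split; auto.
    split; [|split].
    + unfold equilibrium, fL, fR, Cfree; split; ring.
    + intros eps he. exists eps. split; auto. intros Lf Rf hs hin hd t ht.
      unfold dist2 in *. eapply Rle_lt_trans; [|exact hd].
      apply sqrt_le_1_alt. apply (case1_stab al mu ga Lf Rf); auto.
    + intros Lf Rf hs hin. destruct (Hlim Lf Rf hs hin) as [h1 [h2 _]]. auto.
  - apply case2_all; auto.
Qed.
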